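(* Let $P=\sum_{k=0}^nq^kP_k(D)\in\mathbb{C}[q][D]$ with $P_k\in\mathbb{C}[D]$, where $D=q\frac{d}{dq}$. Fix $N\geq0$, let $R=\mathbb{C}[\varepsilon]/(\varepsilon^{N+1})$, and let $\{\overline{c}_i\}_{i\geq0}$ be a sequence of elements of $R$. Then $\{\overline{c}_i\}$ is a Newton solution of $P_\varepsilon$ if and only if the series $I=\sum_{i\geq0}\overline{c}_iq^i\in\mathbb{C}[[q]]\otimes R$ is a perturbed solution of $P$, where $\varepsilon$ plays the role of $h$.
   Context: Newton solution. Put $P_\varepsilon=\sum_kq^kP_k(D+\varepsilon)$. A sequence $\{\overline{c}_i\}_{i\geq 0}$ in $R$ is a Newton solution of $P_\varepsilon$ if for every $m\in\mathbb{Z}$ $$\overline{c}_mP_n(m+\varepsilon)+\overline{c}_{m+1}P_{n-1}(m+1+\varepsilon)+\cdots+\overline{c}_{m+n}P_0(m+n+\varepsilon)=0,$$ with $\overline{c}_i=0$ for $i<0$. Perturbed solution. Write $I=\sum_{j=0}^NI^j(q)\varepsilon^j$ with $I^j\in\mathbb{C}[[q]]$, and put $I_r=\sum_{m=0}^rI^{r-m}(q)\,t^m/m!\in\mathbb{C}[[q]][t]$. Here $P$ acts on $\mathbb{C}[[q]][t]$ via $D(f(q)t^m)=qf'(q)t^m+mf(q)t^{m-1}$, with $q$ acting by multiplication. Then $I$ is a perturbed solution of $P$ if $PI_r=0$ for all $0\leq r\leq N$. *)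

(* Defs.v *)
From HB Require Import structures.
From mathcomp Require Import all_boot all_order all_algebra.
From mathcomp Require Import reals complex.
Set Implicit Arguments. Unset Strict Implicit. Unset Printing Implicit Defensive.
Import Order.TTheory GRing.Theory Num.Theory.
Local Open Scope ring_scope.

(* ---------- The Artinian ring R_eps = F[eps]/(eps^(N+1)) ----------
   An element of R_eps is represented by any polynomial p : {poly F}
   (its class mod eps^(N+1)); the variable 'X plays the role of eps.
   Two representatives define the same element iff their truncations
   (take_poly N.+1) agree; in particular p = 0 in R_eps iff
   take_poly N.+1 p = 0.  Products/sums in R_eps are computed on
   representatives. *)

Definition ext0 (F : fieldType) (c : nat -> {poly F}) (i : int) : {poly F} :=
  match i with Posz k => c k | Negz _ => 0 end.

Definition eval_shift (F : fieldType) (p : {poly F}) (x : int) : {poly F} :=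
  p \Po ('X + (x%:~R)%:P).

Definition newton_solution (F : fieldType) (n N : nat) (Pk : nat -> {poly F})
    (c : nat -> {poly F}) : Prop :=
  forall m : int,
    take_poly N.+1
      (\sum_(j < n.+1) ext0 c (m + j%:Z) * eval_shift (Pk (n - j)%N) (m + j%:Z))
    = 0.

(* ---------- F[[q]][t] ----------
   An element is given by its coefficient array: F a m is the coefficient
   of q^a t^m (for each m, a -> F a m is a formal power series in q). *)
Definition qt_series (F : fieldType) := nat -> nat -> F.

Definition qmul (F : fieldType) (G : qt_series F) : qt_series F :=
  fun a m => if a is a'.+1 then G a' m else 0.

(* D (f(q) t^m) = q f'(q) t^m + m f(q) t^(m-1), extended linearly *)
Definition Dop (F : fieldType) (G : qt_series F) : qt_series F :=
  fun a m => a%:R * G a m + m.+1%:R * G a m.+1.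

Definition polyD_act (F : fieldType) (p : {poly F}) (G : qt_series F)
  : qt_series F :=
  fun a m => \sum_(i < size p) p`_i * iter i (@Dop F) G a m.

Definition P_act (F : fieldType) (n : nat) (Pk : nat -> {poly F})
    (G : qt_series F) : qt_series F :=
  fun a m => \sum_(k < n.+1) iter k (@qmul F) (polyD_act (Pk k) G) a m.

(* I = sum_i cbar_i q^i = sum_{j=0}^N I^j(q) eps^j, with
   I^j(q) = sum_i (coefficient of eps^j in cbar_i) q^i *)
Definition Icoef (F : fieldType) (c : nat -> {poly F}) (j : nat) : nat -> F :=
  fun a => (c a)`_j.

Definition I_r (F : fieldType) (c : nat -> {poly F}) (r : nat) : qt_series F :=
  fun a m => if (m <= r)%N then Icoef c (r - m) a / (m`!)%:R else 0.

Definition perturbed_solution (F : fieldType) (n N : nat) (Pk : nat -> {poly F})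
    (c : nat -> {poly F}) : Prop :=
  forall r : nat, (r <= N)%N -> P_act n Pk (I_r c r) = (fun _ _ => 0).

(* Main.v *)
Require Import Defs.
From HB Require Import structures.
From mathcomp Require Import all_boot all_order all_algebra zify.
From mathcomp Require Import reals complex.
From Stdlib Require Import FunctionalExtensionality.
Import Order.TTheory GRing.Theory Num.Theory.
Local Open Scope ring_scope.
Local Open Scope ring_scope.

Section S.
Variable F : numFieldType.

Definition Phi (r : nat) (x : nat -> {poly F}) : qt_series F :=
  fun a m => if (m <= r)%N then (x a)`_(r - m) / (m`!)%:R else 0.

Lemma fact_neq0 m : (m`!)%:R != 0 :> F.
Proof. by rewrite pnatr_eq0 -lt0n fact_gt0. Qed.

Lemma Dop_Phi r x : Dop (Phi r x) = Phi r (fun a => ('X + (a%:R)%:P) * x a).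
Proof.
apply: functional_extensionality => a; apply: functional_extensionality => m; rewrite /Dop /Phi.
case: (leqP m r) => [hmr|hmr]; last first.
  by rewrite ltnNge ltnW //= !mulr0 addr0.
rewrite mulrDl coefD coefXM coefCM mulrDl addrC mulrA.
case: (ltngtP m r) => [hlt|hlt|->].
- have -> : (r - m == 0)%N = false by rewrite subn_eq0 leqNgt hlt.
  rewrite subnS factS natrM invfM.
  congr (_ + _). rewrite mulrCA [m.+1%:R * _]mulrA mulfV ?mul1r //.
  by rewrite pnatr_eq0.
- by rewrite ltnNge hmr in hlt.

- by rewrite subnn /= mulr0 mul0r.
Qed.

Lemma Phi_sum r (I : finType) (f : I -> F) (x : I -> nat -> {poly F}) a m :
  \sum_i f i * Phi r (x i) a m = Phi r (fun a => \sum_i f i *: x i a) a m.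
Proof.
rewrite /Phi; case: ifP => _; last by rewrite big1 // => i _; rewrite mulr0.
by rewrite coef_sum mulr_suml; apply: eq_bigr => i _; rewrite coefZ mulrA.
Qed.

Lemma iterD_Phi r x i : iter i (@Dop F) (Phi r x) =
  Phi r (fun a => ('X + (a%:R)%:P) ^+ i * x a).
Proof.
elim: i => [|i IH]; first by apply: functional_extensionality=> a; apply: functional_extensionality=> m; rewrite /Phi mul1r.
rewrite iterS IH Dop_Phi.
by apply: functional_extensionality=> a; apply: functional_extensionality=> m; rewrite /Phi exprS mulrA.
Qed.

Lemma polyD_Phi r x p : polyD_act p (Phi r x) =
  Phi r (fun a => (p \Po ('X + (a%:R)%:P)) * x a).
Proof.
apply: functional_extensionality => a; apply: functional_extensionality => m; rewrite /polyD_act.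
under eq_bigr => i _ do rewrite iterD_Phi.
rewrite Phi_sum /Phi; case: ifP => // _.
rewrite comp_polyE mulr_suml.
by under [in RHS]eq_bigr => i _ do rewrite -scalerAl.
Qed.

Lemma iterq_Phi r x k : iter k (@qmul F) (Phi r x) =
  Phi r (fun a => if (k <= a)%N then x (a - k)%N else 0).
Proof.
elim: k => [|k IH].
  by apply: functional_extensionality=> a; apply: functional_extensionality=> m; rewrite /Phi subn0.
rewrite iterS IH; apply: functional_extensionality=> a; apply: functional_extensionality=> m; rewrite /qmul /Phi.
case: a => [|a]; first by case: ifP => //; rewrite coef0 mul0r.
by rewrite ltnS subSS.
Qed.

End S.
Arguments Phi {F}.

Section M.
Variable F : numFieldType.
Variables (n N : nat) (Pk : nat -> {poly F}) (c : nat -> {poly F}).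

Definition dd (b : nat) : {poly F} := \sum_(k < n.+1)
  (if (k <= b)%N then (Pk k \Po ('X + ((b - k)%N%:R)%:P)) * c (b - k)%N else 0).

Lemma PI r : P_act n Pk (I_r c r) = Phi r dd.
Proof.
have -> : I_r c r = Phi r c by [].
apply: functional_extensionality => a; apply: functional_extensionality => m.
rewrite /P_act.
under eq_bigr => k _ do rewrite polyD_Phi iterq_Phi -[Phi _ _ _ _]mul1r.
rewrite Phi_sum /Phi; case: ifP => // _; rewrite /dd.
by under eq_bigr => k _ do rewrite scale1r.
Qed.

Lemma pert_iff : perturbed_solution n N Pk c <->
  (forall b j, (j <= N)%N -> (dd b)`_j = 0).
Proof.
split.
- move=> H b j hj; have := H j hj; rewrite PI => /(congr1 (fun f => f b 0%N)).
  by rewrite /Phi /= subn0 fact0 divr1.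
- move=> H r hr; rewrite PI.
  apply: functional_extensionality => a; apply: functional_extensionality => m.
  rewrite /Phi; case: ifP => // _; rewrite H ?mul0r //.
  exact: leq_trans (leq_subr _ _) hr.
Qed.

Lemma take_eq0 (p : {poly F}) : take_poly N.+1 p = 0 <-> (forall j, (j <= N)%N -> p`_j = 0).
Proof.
split.
- by move=> H j hj; have := congr1 (fun q : {poly F} => q`_j) H; rewrite coef_take_poly ltnS hj coef0.
- move=> H; apply/polyP => j; rewrite coef_take_poly coef0 ltnS; case: ifP => // hj.
  exact: H.
Qed.

Lemma newton_pos b : (\sum_(j < n.+1) ext0 c ((b%:Z - n%:Z) + j%:Z) *
   eval_shift (Pk (n - j)) ((b%:Z - n%:Z) + j%:Z)) = dd b.
Proof.
rewrite (reindex_inj rev_ord_inj) /= /dd; apply: eq_bigr => k _.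
have hk : (k <= n)%N by rewrite -ltnS.
rewrite subSS.
have -> : (b%:Z - n%:Z + (n - k)%N%:Z) = b%:Z - k%:Z by lia.
rewrite subKn //.
case: ifP => hkb.
- by rewrite subzn // /ext0 /eval_shift mulrC.
- have -> : b%:Z - k%:Z = Negz (k - b).-1.
    rewrite NegzE prednK ?subn_gt0; last by rewrite ltnNge hkb.
    lia.
  by rewrite /ext0 mul0r.
Qed.

Lemma newton_neg (m : int) : m + n%:Z < 0 -> (\sum_(j < n.+1) ext0 c (m + j%:Z) *
   eval_shift (Pk (n - j)) (m + j%:Z)) = 0.
Proof.
move=> hm; apply: big1 => j _.
have hj : (j <= n)%N by rewrite -ltnS.
have : m + j%:Z < 0 by lia.
by case: (m + j%:Z) => // k; rewrite /ext0 mul0r.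
Qed.

Lemma newton_iff : newton_solution n N Pk c <->
  (forall b j, (j <= N)%N -> (dd b)`_j = 0).
Proof.
split.
- move=> H b; apply/take_eq0; have := H (b%:Z - n%:Z); by rewrite newton_pos.
- move=> H m; case: (ltrP (m + n%:Z) 0) => hm.
    by rewrite newton_neg //; apply/take_eq0 => j _; rewrite coef0.
  have [b hb] : exists b : nat, m = b%:Z - n%:Z.
    exists (absz (m + n%:Z)); by rewrite gez0_abs // addrK.
  rewrite hb newton_pos; apply/take_eq0; exact: H.
Qed.

End M.

Theorem proposition2p2p2 (R : realType) (n N : nat) (Pk : nat -> {poly R[i]})
    (c : nat -> {poly R[i]}) :
  newton_solution n N Pk c <-> perturbed_solution n N Pk c.
Proof.
exact: (iff_trans (newton_iff _ n N Pk c) (iff_sym (pert_iff _ n N Pk c))).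
Qed.
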